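(* Let $\alpha=(\alpha_1,\dots,\alpha_k)\in\mathbb N^k$ with $k\ge1$ and $\alpha_k>0$, and let $\beta=(\beta_1,\dots,\beta_k)\in\mathbb N^k$. Then $$\widehat M_{\binom{\alpha}{\beta}}=\sum_{I=(i_1,\dots,i_k)}c_{\beta,I}\,M_{(0^{i_1},\alpha_1,0^{i_2},\alpha_2,\dots,0^{i_k},\alpha_k)},$$ where the sum is over all $I$ with $0\le i_j\le\beta_j+\beta_{j+1}+\dots+\beta_k$ for $j=1,\dots,k$.
   Context: $\mathbb P$ and $\mathbb N$ denote positive and nonnegative integers, and $[n]=\{1,\dots,n\}$. Let $X=\{x_i:i\in\mathbb P\}$ be commuting indeterminates. $0^i$ denotes $i$ consecutive zeros. For a sequence $\gamma\in\mathbb N^m$ with $\gamma_m>0$, $M_\gamma=\sum_{0<i_1<\cdots<i_m}x_{i_1}^{\gamma_1}\cdots x_{i_m}^{\gamma_m}$. Also $$\widehat M_{\binom{\alpha}{\beta}}=\sum_{0<i_1<\cdots<i_k}i_1^{\beta_1}\cdots i_k^{\beta_k}x_{i_1}^{\alpha_1}\cdots x_{i_k}^{\alpha_k}.$$ $c_{\beta,I}$ is defined as follows. Put $b_j=\beta_1+\dots+\beta_j$ and $N_j=(i_1+1)+\dots+(i_j+1)$. Then $c_{\beta,I}$ is the number of maps $f:[b_k]\to[N_k]$ with $f([b_j])\subseteq[N_j]$ for all $j$ and $f([b_k])\cup\{N_1,\dots,N_k\}=[N_k]$. If $b_k=0$, the empty map is the only map. *)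

(* Defs.v *)
From HB Require Import structures.
From mathcomp Require Import all_boot all_order all_algebra.
From mathcomp Require Import mpoly.
Set Implicit Arguments. Unset Strict Implicit. Unset Printing Implicit Defensive.
Import Order.TTheory GRing.Theory Num.Theory.
Local Open Scope ring_scope.

(* Truncation to the variables x_1..x_n (x_{i+1} is 'X_i, i : 'I_n)
   of the monomial quasisymmetric function
   M_g = sum_{0<i_1<...<i_m} x_{i_1}^{g_1} ... x_{i_m}^{g_m}, m = size g. *)
Definition Mq (n : nat) (g : seq nat) : {mpoly int[n]} :=
  \sum_(t : (size g).-tuple 'I_n | sorted (fun a b : 'I_n => (val a < val b)%N) t)
     \prod_(j < size g) 'X_(tnth t j) ^+ nth 0%N g j.

(* Truncation to x_1..x_n of
   Mhat_{(alpha;beta)} = sum_{0<i_1<...<i_k} i_1^{b_1}..i_k^{b_k} x_{i_1}^{a_1}..x_{i_k}^{a_k},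
   here with k.+1 parts indexed by 'I_k.+1. *)
Definition Mhat (n k : nat) (alpha beta : 'I_k.+1 -> nat) : {mpoly int[n]} :=
  \sum_(t : k.+1.-tuple 'I_n | sorted (fun a b : 'I_n => (val a < val b)%N) t)
     \prod_(j < k.+1)
        (((val (tnth t j)).+1 ^ beta j)%N%:R * 'X_(tnth t j) ^+ alpha j).

Definition compos (k : nat) (alpha I : 'I_k.+1 -> nat) : seq nat :=
  flatten [seq rcons (nseq (I j) 0%N) (alpha j) | j <- enum 'I_k.+1].

(* b_j and N_j (0-based index j : 'I_k.+1 stands for the paper's j+1). *)
Definition bpart (k : nat) (beta : 'I_k.+1 -> nat) (j : 'I_k.+1) : nat :=
  (\sum_(l : 'I_k.+1 | (val l <= val j)%N) beta l)%N.
Definition Npart (k : nat) (I : 'I_k.+1 -> nat) (j : 'I_k.+1) : nat :=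
  (\sum_(l : 'I_k.+1 | (val l <= val j)%N) (I l).+1)%N.

(* c_{beta,I}: number of maps f : [b_k] -> [N_k] with f([b_j]) in [N_j] for all j
   and f([b_k]) U {N_1,...,N_k} = [N_k].  Elements x of [b_k] are encoded 0-based
   as x : 'I_(b_k) (value x+1), similarly for [N_k]. *)
Definition cbI (k : nat) (beta I : 'I_k.+1 -> nat) : nat :=
  #|[set f : {ffun 'I_(bpart beta ord_max) -> 'I_(Npart I ord_max)} |
      [forall x, forall j : 'I_k.+1,
         ((val x < bpart beta j)%N ==> (val (f x) < Npart I j)%N)] &&
      [forall y : 'I_(Npart I ord_max),
         [exists x, f x == y] || [exists j : 'I_k.+1, (val y).+1 == Npart I j]]]|.

Definition bsuffix (k : nat) (beta : 'I_k.+1 -> nat) (j : 'I_k.+1) : nat :=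
  (\sum_(l : 'I_k.+1 | (val j <= val l)%N) beta l)%N.
Definition btotal (k : nat) (beta : 'I_k.+1 -> nat) : nat :=
  (\sum_(l : 'I_k.+1) beta l)%N.

(* Main.v *)
Require Import Defs.
From HB Require Import structures.
From mathcomp Require Import all_boot all_order all_algebra.
From mathcomp Require Import mpoly.
From mathcomp Require Import zify.
From Stdlib Require Import FunctionalExtensionality.
Set Implicit Arguments. Unset Strict Implicit. Unset Printing Implicit Defensive.
Import Order.TTheory GRing.Theory Num.Theory.

Section Psum.
Variable K : nat.
Definition psum (F : 'I_K.+1 -> nat) (m : nat) : nat := \sum_(i < m) F (inord i).

Lemma sum_le_ord (F : 'I_K.+1 -> nat) (j : 'I_K.+1) :
  \sum_(l | (val l <= val j)%N) F l = psum F j.+1.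
Proof.
rewrite /psum (big_ord_widen_cond (n1:=j.+1) K.+1 xpredT (fun i => F (inord i)) (ltn_ord j)).
rewrite [RHS]big_mkcond /= [LHS]big_mkcond /=; apply: eq_bigr => i _.
by rewrite ltnS inord_val.
Qed.

Lemma psumS F m : psum F m.+1 = psum F m + F (inord m).
Proof. by rewrite /psum big_ord_recr. Qed.

Lemma psum0 F : psum F 0 = 0.
Proof. by rewrite /psum big_ord0. Qed.

Lemma psum_mono F m1 m2 : m1 <= m2 -> psum F m1 <= psum F m2.
Proof.
move=> le; elim: m2 le => [|m2 IH]; first by rewrite leqn0 => /eqP ->.
rewrite leq_eqVlt => /orP[/eqP->//|]; rewrite ltnS => /IH h.
by rewrite psumS (leq_trans h) ?leq_addr.
Qed.

Lemma psum_all F : \sum_(l : 'I_K.+1) F l = psum F K.+1.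
Proof. by rewrite /psum; apply: eq_bigr => i _; rewrite inord_val. Qed.
End Psum.

Lemma sumn_iota (H : nat -> nat) j : sumn (map H (iota 0 j)) = \sum_(i < j) H i.
Proof. by rewrite sumnE big_map -(big_mkord xpredT H) /index_iota subn0. Qed.

Lemma map_enum_ord (T : Type) K (G : 'I_K.+1 -> T) :
  map G (enum 'I_K.+1) = map (fun i => G (inord i)) (iota 0 K.+1).
Proof.
by rewrite -val_enum_ord -map_comp; apply: eq_map => x /=; rewrite inord_val.
Qed.

Section Comp.
Variable k : nat.
Local Notation K := k.+1.
Variable alpha : 'I_K -> nat.

Definition posN (I : 'I_K -> nat) (j : 'I_K) : nat := (Npart I j).-1.

Lemma NpartE (I : 'I_K -> nat) (j : 'I_K) : Npart I j = psum (fun l => (I l).+1) j.+1.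
Proof. exact: sum_le_ord. Qed.

Lemma posNE (I : 'I_K -> nat) (j : 'I_K) : posN I j = psum (fun l => (I l).+1) j + I j.
Proof. by rewrite /posN NpartE psumS inord_val addnS. Qed.

Lemma Npart_posN (I : 'I_K -> nat) (j : 'I_K) : Npart I j = (posN I j).+1.
Proof. by rewrite posNE NpartE psumS inord_val addnS. Qed.

Lemma posN_lt (I : 'I_K -> nat) (j1 j2 : 'I_K) : (val j1 < val j2)%N -> (posN I j1 < posN I j2)%N.
Proof.
move=> lt; rewrite !posNE.
have h : (psum (fun l => (I l).+1) j1.+1 <= psum (fun l => (I l).+1) j2)%N by apply: psum_mono.
rewrite psumS inord_val in h; lia.
Qed.

Lemma posN_inj (I : 'I_K -> nat) : injective (posN I).
Proof.
move=> j1 j2 e; apply: val_inj; case: (ltngtP (val j1) (val j2)) => // h.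
- by have := posN_lt I h; rewrite e ltnn.
- by have := posN_lt I h; rewrite e ltnn.
Qed.

Lemma posN_max (I : 'I_K -> nat) (j : 'I_K) : (posN I j < Npart I ord_max)%N.
Proof.
rewrite Npart_posN ltnS; case: (ltngtP (val j) (val (@ord_max k))) => h.
- exact: ltnW (posN_lt I h).
- by move: (ltn_ord j); rewrite /= ltnS leqNgt h.
- by rewrite (_ : j = ord_max) //; apply: val_inj.
Qed.

Lemma Npart_max (I : 'I_K -> nat) : Npart I ord_max = \sum_(l : 'I_K) (I l).+1.
Proof. by rewrite /Npart; apply: eq_bigl => l; rewrite -ltnS ltn_ord. Qed.

Definition csh (I : 'I_K -> nat) := [seq (I j).+1 | j <- enum 'I_K].
Definition css (I : 'I_K -> nat) := [seq rcons (nseq (I j) 0%N) (alpha j) | j <- enum 'I_K].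

Lemma shape_css (I : 'I_K -> nat) : shape (css I) = csh I.
Proof. by rewrite /shape /css /csh -map_comp; apply: eq_map => j /=; rewrite size_rcons size_nseq. Qed.

Lemma compos_size (I : 'I_K -> nat) : size (compos alpha I) = Npart I ord_max.
Proof.
rewrite /compos size_flatten -/(css I) shape_css Npart_max /csh sumnE big_map big_enum.
by [].
Qed.

Lemma sumn_take_csh (I : 'I_K -> nat) (j : 'I_K) : sumn (take j (csh I)) = psum (fun l => (I l).+1) j.
Proof.
rewrite /csh (map_enum_ord (fun j => (I j).+1)) -map_take take_iota sumn_iota.
by rewrite /psum (minn_idPl (ltnW (ltn_ord j))).
Qed.

Lemma nth_csh (I : 'I_K -> nat) (j : 'I_K) : nth 0%N (csh I) j = (I j).+1.
Proof. by rewrite /csh (nth_map j) ?size_enum_ord // nth_ord_enum. Qed.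

Lemma nth_css (I : 'I_K -> nat) (j : 'I_K) : nth [::] (css I) j = rcons (nseq (I j) 0%N) (alpha j).
Proof. by rewrite /css (nth_map j) ?size_enum_ord // nth_ord_enum. Qed.

Lemma nth_compos (I : 'I_K -> nat) (j : 'I_K) : nth 0%N (compos alpha I) (posN I j) = alpha j.
Proof.
have fi : posN I j = flatten_index (csh I) j (I j).
  by rewrite posNE /flatten_index sumn_take_csh.
have lt : (I j < nth 0%N (csh I) j)%N by rewrite nth_csh.
rewrite /compos -/(css I) nth_flatten shape_css fi flatten_indexKl // flatten_indexKr //.
by rewrite nth_css nth_rcons size_nseq ltnn eqxx.
Qed.

Lemma nth_compos0 (I : 'I_K -> nat) p : (p < size (compos alpha I))%N ->
  nth 0%N (compos alpha I) p != 0%N -> exists j, p = posN I j.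
Proof.
rewrite /compos -/(css I) nth_flatten shape_css size_flatten shape_css => lt.
have r_lt := reshape_indexP lt.
have o_lt := reshape_offsetP lt.
have sz : size (csh I) = K by rewrite size_map size_enum_ord.
rewrite sz in r_lt.
set r := reshape_index _ _ in r_lt o_lt *; set o := reshape_offset _ _ in o_lt *.
have -> : r = val (Ordinal r_lt) by [].
rewrite nth_css; rewrite (_ : r = val (Ordinal r_lt)) // nth_csh in o_lt.
rewrite nth_rcons size_nseq.
case: ltnP => h1; first by rewrite nth_nseq h1 eqxx.
have eo : o = I (Ordinal r_lt) by apply/eqP; rewrite eqn_leq h1 -ltnS o_lt.
move=> _; exists (Ordinal r_lt).
rewrite posNE -(sumn_take_csh I (Ordinal r_lt)) -eo.
by rewrite -[LHS](reshape_indexK (csh I) p).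
Qed.
End Comp.

Section T3.
Local Open Scope ring_scope.

Lemma prod_inj_support (R : comRingType) (m K : nat) (G : nat -> R) (e : 'I_K -> nat) :
  injective e -> (forall j, (e j < m)%N) ->
  (forall p, (p < m)%N -> (forall j, p != e j) -> G p = 1) ->
  \prod_(p < m) G p = \prod_(j < K) G (e j).
Proof.
move=> einj elt G1.
rewrite -(big_mkord xpredT) /index_iota subn0.
transitivity (\prod_(p <- iota 0 m | p \in map e (enum 'I_K)) G p).
  rewrite [RHS]big_mkcond /=; apply: eq_big_seq => p; rewrite mem_iota => /andP[_ pm].
  case: ifP => // /negbT h; apply: G1 => // j; apply/eqP => ej.
  by move: h; rewrite ej map_f ?mem_enum.
rewrite -big_filter (perm_big (map e (enum 'I_K))).
  by rewrite big_map big_enum.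
apply: uniq_perm.
- by rewrite filter_uniq ?iota_uniq.
- by rewrite (map_inj_uniq einj) enum_uniq.
move=> p; rewrite mem_filter mem_iota /= andb_idr // => /mapP[j _ ->].
by rewrite elt.
Qed.

Section Mono.
Variables (k : nat) (alpha : 'I_k.+1 -> nat) (n : nat).
Local Notation K := k.+1.

Definition mono (t : K.-tuple 'I_n.+1) : {mpoly int[n.+1]} :=
  \prod_(j < K) 'X_(tnth t j) ^+ alpha j.
Definition hmap (I : 'I_K -> nat) (s : seq 'I_n.+1) : K.-tuple 'I_n.+1 :=
  [tuple nth ord0 s (posN I j) | j < K].

Lemma Mq_expand (I : 'I_K -> nat) :
  Mq n.+1 (compos alpha I) =
  \sum_(s : (size (compos alpha I)).-tuple 'I_n.+1 |
          sorted (fun a b : 'I_n.+1 => (val a < val b)%N) s) mono (hmap I s).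
Proof.
rewrite /Mq; apply: eq_bigr => s _.
rewrite /mono; under [RHS]eq_bigr do rewrite tnth_mktuple.
rewrite (eq_bigr (fun p : 'I_(size (compos alpha I)) => 'X_(nth ord0 s p) ^+ nth 0%N (compos alpha I) p)); last first.
  by move=> p _; rewrite (tnth_nth ord0).
rewrite (prod_inj_support (G := fun p => 'X_(nth ord0 s p) ^+ nth 0%N (compos alpha I) p)
   (e := posN I)).
- by apply: eq_bigr => j _; rewrite nth_compos.
- exact: posN_inj.
- by move=> j; rewrite compos_size posN_max.
- move=> p plt hp; case: (eqVneq (nth 0%N (compos alpha I) p) 0%N) => [->|h]; first by rewrite expr0.
  by have [j ej] := nth_compos0 plt h; move: (hp j); rewrite ej eqxx.
Qed.
End Mono.

End T3.

Section Sorted.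
Variable N : nat.
Local Notation ltI := (fun a b : 'I_N => (val a < val b)%N).

Lemma ltI_trans : transitive ltI.
Proof. by move=> a c d /= h1 h2; apply: ltn_trans h1 h2. Qed.
Lemma ltI_irr : irreflexive ltI.
Proof. by move=> a /=; rewrite ltnn. Qed.

Lemma sorted_uniqI (s : seq 'I_N) : sorted ltI s -> uniq s.
Proof. exact: (sorted_uniq ltI_trans ltI_irr). Qed.

Lemma nth_ltI (s : seq 'I_N) x0 i j : sorted ltI s -> (i < j)%N -> (j < size s)%N ->
  (val (nth x0 s i) < val (nth x0 s j))%N.
Proof.
move=> ss ij js; apply: (sorted_ltn_nth ltI_trans x0 ss) => //.
by rewrite inE (ltn_trans ij).
Qed.

Lemma nth_leI (s : seq 'I_N) x0 i j : sorted ltI s -> (i <= j)%N -> (j < size s)%N ->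
  (val (nth x0 s i) <= val (nth x0 s j))%N.
Proof.
move=> ss; rewrite leq_eqVlt => /orP[/eqP->//|ij] js.
by apply: ltnW; apply: nth_ltI.
Qed.

Lemma index_leI (s : seq 'I_N) y z : sorted ltI s -> y \in s -> z \in s ->
  (val y <= val z)%N -> (index y s <= index z s)%N.
Proof.
move=> ss ys zs yz; rewrite leqNgt; apply/negP => h.
have := nth_ltI y ss h; rewrite index_mem => /(_ ys).
by rewrite !nth_index // ltnNge yz.
Qed.

Lemma index_ltI (s : seq 'I_N) y z : sorted ltI s -> y \in s -> z \in s ->
  (val y < val z)%N -> (index y s < index z s)%N.
Proof.
move=> ss ys zs yz; rewrite ltnNge; apply/negP => h.
have := nth_leI y ss h; rewrite index_mem => /(_ ys).
by rewrite !nth_index // leqNgt yz.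
Qed.
End Sorted.

Section Count.
Variables (k : nat) (beta : 'I_k.+1 -> nat) (n : nat).
Local Notation K := k.+1.
Local Notation b := (bpart beta ord_max).

Definition Pf (I : 'I_K -> nat) (s : seq 'I_n.+1) (f : {ffun 'I_b -> 'I_n.+1}) : bool :=
  [&& [forall x, f x \in s],
      [forall x : 'I_b, forall j : 'I_K, (val x < bpart beta j)%N ==>
          (val (f x) <= val (nth ord0 s (posN I j)))%N] &
      [forall y : 'I_n.+1, (y \in s) ==>
          ([exists x, f x == y] || [exists j, nth ord0 s (posN I j) == y])]].

Lemma cbI_count (I : 'I_K -> nat) (s : seq 'I_n.+1) :
  sorted (fun a b : 'I_n.+1 => (val a < val b)%N) s -> size s = Npart I ord_max ->
  cbI beta I = #|[set f | Pf I s f]|.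
Proof.
move=> ss sz; have us := sorted_uniqI ss.
have posNs j : (posN I j < size s)%N by rewrite sz posN_max.
rewrite /cbI.
set G := [set g : {ffun 'I_b -> 'I_(Npart I ord_max)} | _].
pose phi (g : {ffun 'I_b -> 'I_(Npart I ord_max)}) : {ffun 'I_b -> 'I_n.+1} :=
  [ffun x => nth ord0 s (g x)].
rewrite -(@card_in_imset _ _ phi); last first.
  move=> g1 g2 _ _ e; apply/ffunP => x; have := congr1 (fun h : {ffun 'I_b -> 'I_n.+1} => h x) e.
  rewrite !ffunE => /eqP; rewrite nth_uniq ?sz // => /eqP h; exact: val_inj.
apply: eq_card => f; rewrite [in RHS]inE; apply/imsetP/idP.
- move=> [g]; rewrite inE => /andP[/forallP c1 /forallP c2] ->.
  apply/and3P; split.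
  + by apply/forallP => x; rewrite ffunE mem_nth ?sz.
  + apply/forallP => x; apply/forallP => j; apply/implyP => xj.
    rewrite ffunE; apply: nth_leI => //.
    by move: (forallP (c1 x) j); rewrite xj /= [Npart I j]Npart_posN ltnS.
  + apply/forallP => y; apply/implyP => ys.
    have ilt : (index y s < Npart I ord_max)%N by rewrite -sz index_mem.
    case/orP: (c2 (Ordinal ilt)) => [/existsP[x /eqP gx]|/existsP[j /eqP ej]].
    * by apply/orP; left; apply/existsP; exists x; rewrite ffunE gx /= nth_index.
    * apply/orP; right; apply/existsP; exists j.
      move: ej; rewrite [Npart I j]Npart_posN /= => -[<-]; by rewrite nth_index.
- case/and3P => /forallP d1 /forallP d2 /forallP d3.
  have hlt x : (index (f x) s < Npart I ord_max)%N by rewrite -sz index_mem.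
  exists [ffun x => Ordinal (hlt x)]; last first.
    by apply/ffunP => x; rewrite !ffunE /= nth_index.
  rewrite inE; apply/andP; split.
  + apply/forallP => x; apply/forallP => j; apply/implyP => xj.
    rewrite ffunE /= [Npart I j]Npart_posN ltnS.
    have := implyP (forallP (d2 x) j) xj => le.
    rewrite -(index_uniq ord0 (posNs j) us).
    apply: index_leI => //; by rewrite mem_nth.
  + apply/forallP => y.
    have ys : nth ord0 s y \in s by rewrite mem_nth ?sz.
    case/orP: (implyP (d3 _) ys) => [/existsP[x /eqP fx]|/existsP[j /eqP ej]].
    * apply/orP; left; apply/existsP; exists x; rewrite ffunE; apply/eqP/val_inj => /=.
      by rewrite fx index_uniq ?sz.
    * apply/orP; right; apply/existsP; exists j; rewrite [Npart I j]Npart_posN eqSS.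
      apply/eqP; move/eqP: ej; rewrite nth_uniq ?sz ?posN_max // => /eqP ->; by [].
Qed.
End Count.

Lemma card_le_ord N c : (c < N)%N -> #|[set y : 'I_N | (val y <= c)%N]| = c.+1.
Proof.
move=> cN.
have winj : injective (@widen_ord c.+1 N cN) by move=> a d /(congr1 val) /= e; apply: val_inj.
rewrite -[c.+1]card_ord -(card_imset _ winj).
apply: eq_card => y; rewrite inE; apply/idP/imsetP.
- by move=> yc; exists (Ordinal (yc : (val y < c.+1)%N)) => //; apply: val_inj.
- by case=> z _ ->; rewrite /= -ltnS.
Qed.

Section LHS.
Variables (k : nat) (beta : 'I_k.+1 -> nat) (n : nat).
Local Notation K := k.+1.
Local Notation b := (bpart beta ord_max).

Definition condf (t : K.-tuple 'I_n.+1) (f : {ffun 'I_b -> 'I_n.+1}) : bool :=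
  [forall x : 'I_b, forall j : 'I_K, (val x < bpart beta j)%N ==>
       (val (f x) <= val (tnth t j))%N].

Lemma bpartE (j : 'I_K) : bpart beta j = psum beta j.+1.
Proof. exact: sum_le_ord. Qed.

Lemma b_psum : b = psum beta K.
Proof. by rewrite bpartE. Qed.

Lemma sorted_tnth (t : K.-tuple 'I_n.+1) (j1 j2 : 'I_K) :
  sorted (fun a b : 'I_n.+1 => (val a < val b)%N) t -> (val j1 <= val j2)%N ->
  (val (tnth t j1) <= val (tnth t j2))%N.
Proof.
move=> st le; rewrite !(tnth_nth ord0); apply: nth_leI => //.
by rewrite size_tuple.
Qed.

Lemma lhs_count (t : K.-tuple 'I_n.+1) :
  sorted (fun a b : 'I_n.+1 => (val a < val b)%N) t ->
  (\prod_(j < K) (val (tnth t j)).+1 ^ beta j)%N = #|[set f | condf t f]|.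
Proof.
move=> st.
pose A (x : nat) := [set y : 'I_n.+1 | [forall j : 'I_K, (x < bpart beta j)%N ==>
       (val y <= val (tnth t j))%N]].
have -> : #|[set f | condf t f]| = #|(family (fun x : 'I_b => mem (A x)) : simpl_pred {ffun 'I_b -> 'I_n.+1})|.
  apply: eq_card => f; rewrite inE; apply/forallP/familyP => h x.
  - by rewrite inE; apply/forallP => j; have := forallP (h x) j.
  - by apply/forallP => j; have := h x; rewrite inE => /forallP /(_ j).
rewrite card_family foldrE big_map big_enum /=.
rewrite -(big_mkord xpredT (fun x => #|A x|)) /= /index_iota subn0 b_psum.
have blk : forall m, (m <= K)%N ->
  (\prod_(0 <= x < psum beta m) #|A x| =
   \prod_(j < m) \prod_(psum beta j <= x < psum beta j.+1) #|A x|)%N.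
  elim=> [|m IH] mK; first by rewrite psum0 big_geq // big_ord0.
  rewrite big_ord_recr /= -IH ?(ltnW mK) //.
  by rewrite -big_cat_nat ?psum_mono ?leqnSn.
have -> : iota 0 (psum beta K) = index_iota 0 (psum beta K) by rewrite /index_iota subn0.
rewrite (blk K) //.
apply: eq_bigr => j _.
rewrite (eq_big_nat _ _ (F2 := fun=> (val (tnth t j)).+1)); last first.
  move=> x /andP[lo hi]; rewrite -[RHS](card_le_ord (ltn_ord (tnth t j))).
  apply: eq_card => y; rewrite !inE; apply/forallP/idP.
  - move=> h; have := h j; rewrite bpartE hi /=; by apply.
  - move=> yt j'; apply/implyP; rewrite bpartE => xj'.
    apply: leq_trans yt _; apply: sorted_tnth => //.
    rewrite leqNgt; apply/negP => jj.
    have := psum_mono beta jj; move: (leq_ltn_trans lo xj'); move=> h1 h2; have := leq_trans h1 h2; rewrite ltnNge => /negP; apply; apply: leqnn.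
by rewrite prod_nat_const_nat psumS inord_val addKn.
Qed.
End LHS.

Lemma card_interval N lo hi : (lo <= hi <= N)%N ->
  #|[set x : 'I_N | (lo <= val x < hi)%N]| = (hi - lo)%N.
Proof.
move=> /andP[lh hN].
have lt (z : 'I_(hi - lo)) : (lo + val z < N)%N.
  by move: (ltn_ord z) => /= zl; lia.
pose w (z : 'I_(hi - lo)) := Ordinal (lt z).
have winj : injective w by move=> a d /(congr1 val) /= /addnI e; apply: val_inj.
rewrite -[(hi - lo)%N]card_ord -(card_imset _ winj).
apply: eq_card => y; rewrite inE; apply/idP/imsetP.
- move=> /andP[h1 h2].
  have yl : (val y - lo < hi - lo)%N by rewrite ltn_sub2r // (leq_ltn_trans h1 h2).
  by exists (Ordinal yl) => //; apply: val_inj => /=; rewrite subnKC.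
- by case=> z _ -> /=; rewrite leq_addr /= -ltn_subRL ltn_ord.
Qed.

Lemma sum_lt_ord K (F : 'I_K.+1 -> nat) (j : 'I_K.+1) :
  \sum_(l | (val l < val j)%N) F l = psum F j.
Proof.
rewrite /psum (big_ord_widen_cond (n1:=j) K.+1 xpredT (fun i => F (inord i)) (ltnW (ltn_ord j))).
rewrite [RHS]big_mkcond /= [LHS]big_mkcond /=; apply: eq_bigr => i _.
by rewrite inord_val.
Qed.

Lemma bsuffixE K (beta : 'I_K.+1 -> nat) (j : 'I_K.+1) :
  bsuffix beta j = (psum beta K.+1 - psum beta j)%N.
Proof.
rewrite -psum_all (bigID (fun l : 'I_K.+1 => (val l < val j)%N)) /= sum_lt_ord addKn.
by rewrite /bsuffix; apply: eq_bigl => l; rewrite -leqNgt.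
Qed.

Lemma bsuffix_le K (beta : 'I_K.+1 -> nat) (j : 'I_K.+1) : (bsuffix beta j <= btotal beta)%N.
Proof. by rewrite bsuffixE /btotal psum_all leq_subr. Qed.

Lemma sorted_enum_ordI N : sorted (fun a b : 'I_N => (val a < val b)%N) (enum 'I_N).
Proof.
have := iota_ltn_sorted 0 N; rewrite -val_enum_ord sorted_map; by [].
Qed.

Lemma sorted_tupleI N K (t : K.-tuple 'I_N) :
  (forall i j : 'I_K, (val i < val j)%N -> (val (tnth t i) < val (tnth t j))%N) ->
  sorted (fun a b : 'I_N => (val a < val b)%N) t.
Proof.
case: K t => [|K'] t h.
  by case: t h => -[|x s] //.
rewrite (sorted_pairwise (@ltI_trans N)).
apply/(pairwiseP (tnth t ord0)) => i j.
rewrite !inE size_tuple => ilt jlt ij.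
have := h (Ordinal ilt) (Ordinal jlt) ij.
by rewrite (tnth_nth (tnth t ord0) t (Ordinal ilt)) (tnth_nth (tnth t ord0) t (Ordinal jlt)).
Qed.


Section Bound.
Variables (k : nat) (beta : 'I_k.+1 -> nat) (n : nat).
Local Notation K := k.+1.
Local Notation b := (bpart beta ord_max).

Lemma posN_lt_psum (I : 'I_K -> nat) (l j : 'I_K) : (val l < val j)%N ->
  (posN I l < psum (fun l => (I l).+1) j)%N.
Proof.
move=> lj; rewrite posNE; apply: leq_trans (psum_mono _ lj).
by rewrite psumS inord_val addnS.
Qed.

Lemma Pf_bound (I : 'I_K -> nat) (s : seq 'I_n.+1) (f : {ffun 'I_b -> 'I_n.+1}) :
  sorted (fun a b : 'I_n.+1 => (val a < val b)%N) s -> size s = Npart I ord_max ->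
  Pf I s f -> forall j, (I j <= bsuffix beta j)%N.
Proof.
move=> ss sz /and3P[/forallP d1 /forallP d2 /forallP d3] j.
have us := sorted_uniqI ss.
have posNs l : (posN I l < size s)%N by rewrite sz posN_max.
set lo := psum (fun l => (I l).+1) j.
have hiN : (lo + I j <= size s)%N by rewrite -posNE ltnW.
pose P := [set p : 'I_(size s) | (lo <= val p < lo + I j)%N].
have cP : #|P| = I j by rewrite card_interval ?leq_addr // addKn.
have hpos x : (index (f x) s < size s)%N by rewrite index_mem d1.
pose pos (x : 'I_b) : 'I_(size s) := Ordinal (hpos x).
pose X := [set x : 'I_b | (psum beta j <= val x)%N].
have cX : #|X| = bsuffix beta j.
  rewrite bsuffixE -b_psum -(@card_interval b).
    by apply: eq_card => x; rewrite !inE ltn_ord andbT.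
  by rewrite leqnn andbT b_psum psum_mono // ltnW.
have sub : P \subset pos @: X.
  apply/subsetP => p; rewrite inE => /andP[h1 h2].
  have ys : nth ord0 s p \in s by rewrite mem_nth.
  case/orP: (implyP (d3 _) ys) => [/existsP[x /eqP fx] | /existsP[l /eqP el]].
  - apply/imsetP; exists x; last by apply: val_inj; rewrite /= fx index_uniq.
    rewrite inE leqNgt; apply/negP => xlt.
    case: (posnP (val j)) => j0.
      by move: xlt; rewrite j0 psum0.
    have lK : (j.-1 < K)%N by rewrite (leq_ltn_trans (leq_pred _)).
    pose l : 'I_K := Ordinal lK.
    have xl : (val x < bpart beta l)%N by rewrite [bpart beta l]bpartE /= prednK.
    have := implyP (forallP (d2 x) l) xl => le.
    have : (index (f x) s <= posN I l)%N.
      rewrite -[X in (_ <= X)%N](index_uniq ord0 (posNs l) us).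
      by apply: index_leI => //; rewrite ?d1 ?mem_nth.
    rewrite fx index_uniq // => pl.
    have lj : (val l < val j)%N by rewrite /= ltn_predL.
    have := posN_lt_psum I lj; rewrite -/lo => H.
    by move: (leq_ltn_trans pl H); rewrite ltnNge h1.
  - have pe : val p = posN I l.
      by apply/eqP; rewrite -(nth_uniq ord0 _ _ us) ?posNs ?ltn_ord // el.
    case: (ltnP (val l) (val j)) => lj.
      by move: h1; rewrite pe leqNgt posN_lt_psum.
    have : (posN I j <= posN I l)%N.
      move: lj; rewrite leq_eqVlt => /orP[/eqP e|lt].
        by rewrite (_ : j = l) //; apply: val_inj.
      exact: ltnW (posN_lt I lt).
    by rewrite posNE -/lo -pe leqNgt h2.
rewrite -cP -cX; apply: leq_trans (subset_leq_card sub) _.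
exact: leq_imset_card.
Qed.
End Bound.

Section Bij.
Variables (k : nat) (alpha beta : 'I_k.+1 -> nat) (n : nat).
Local Notation K := k.+1.
Local Notation b := (bpart beta ord_max).
Local Notation ltI := (fun a b : 'I_n.+1 => (val a < val b)%N).

Definition Ufam (I : {ffun 'I_K -> 'I_(btotal beta).+1}) : finType :=
  (size (compos alpha (fun j => nat_of_ord (I j)))).-tuple 'I_n.+1.
Definition U := {I : {ffun 'I_K -> 'I_(btotal beta).+1} & Ufam I}.

Definition Dsel (f : {ffun 'I_b -> 'I_n.+1}) (u : U) : bool :=
  [&& [forall j, (nat_of_ord (tag u j) <= bsuffix beta j)%N],
      sorted ltI (tagged u) &
      Pf (fun j => nat_of_ord (tag u j)) (tagged u) f].

Definition hU (u : U) : K.-tuple 'I_n.+1 := hmap (fun j => nat_of_ord (tag u j)) (tagged u).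

Lemma mem_s (I : 'I_K -> nat) (s : seq 'I_n.+1) (f : {ffun 'I_b -> 'I_n.+1}) :
  size s = Npart I ord_max -> Pf I s f ->
  forall y, (y \in s) = ([exists x, f x == y] || [exists j, tnth (hmap I s) j == y]).
Proof.
move=> sz /and3P[/forallP d1 _ /forallP d3] y.
apply/idP/idP.
- move=> ys; have := implyP (d3 y) ys.
  by case/orP => [->//|/existsP[j ej]]; apply/orP; right; apply/existsP; exists j; rewrite tnth_mktuple.
- case/orP => [/existsP[x /eqP <-]|/existsP[j /eqP <-]]; first exact: d1.
  by rewrite tnth_mktuple mem_nth // sz posN_max.
Qed.

Lemma tnth_hmap (I : 'I_K -> nat) (s : seq 'I_n.+1) j :
  tnth (hmap I s) j = nth ord0 s (posN I j).
Proof. by rewrite tnth_mktuple. Qed.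

Lemma image_ok' (I : 'I_K -> nat) (s : seq 'I_n.+1) (f : {ffun 'I_b -> 'I_n.+1}) :
  size s = Npart I ord_max -> sorted ltI s -> Pf I s f ->
  sorted ltI (hmap I s) && condf (hmap I s) f.
Proof.
move=> sz ss /and3P[d1 /forallP d2 d3].
apply/andP; split.
- apply: sorted_tupleI => i j ij; rewrite !tnth_hmap.
  by apply: nth_ltI => //; rewrite ?posN_lt // sz posN_max.
- apply/forallP => x; apply/forallP => j; apply/implyP => xj.
  by rewrite tnth_hmap; have := implyP (forallP (d2 x) j) xj.
Qed.

Lemma size_tagged (u : U) : size (tagged u) = Npart (fun j => nat_of_ord (tag u j)) ord_max.
Proof. by rewrite size_tuple compos_size. Qed.

Lemma image_ok f u : Dsel f u -> sorted ltI (hU u) && condf (hU u) f.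
Proof.
case/and3P => _ ss P; exact: image_ok' (size_tagged u) ss P.
Qed.

Lemma Npart_inj (I1 I2 : 'I_K -> nat) :
  (forall j, Npart I1 j = Npart I2 j) -> forall j, I1 j = I2 j.
Proof.
move=> e j; have E := e j; rewrite !Npart_posN !posNE in E.
move/eqP: E; rewrite eqSS => /eqP E.
case: (posnP j) => j0.
  by move: E; rewrite j0 !psum0 !add0n.
have lK : (j.-1 < K)%N by rewrite (leq_ltn_trans (leq_pred _)).
pose l : 'I_K := Ordinal lK.
have pj (I : 'I_K -> nat) : psum (fun l => (I l).+1) j = Npart I l.
  by rewrite NpartE /= prednK.
by move: E; rewrite !pj e => /addnI.
Qed.

Lemma inj_on f : {in Dsel f &, injective hU}.
Proof.
move=> [I1 s1] [I2 s2]; rewrite /in_mem /= /Dsel /hU /=.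
move=> /and3P[_ ss1 P1] /and3P[_ ss2 P2] eh.
have sz1 := size_tagged (Tagged Ufam s1); have sz2 := size_tagged (Tagged Ufam s2).
simpl in sz1, sz2.
have es : s1 = s2 :> seq 'I_n.+1.
  apply: (irr_sorted_eq (@ltI_trans n.+1) (@ltI_irr n.+1)) => // y.
  by rewrite (mem_s sz1 P1) (mem_s sz2 P2) eh.
have u1 : uniq s1 := sorted_uniqI ss1.
have eN j : Npart (fun j => nat_of_ord (I1 j)) j = Npart (fun j => nat_of_ord (I2 j)) j.
  rewrite !Npart_posN; congr S.
  have p1 : (posN (fun j => nat_of_ord (I1 j)) j < size s1)%N by rewrite sz1 posN_max.
  have p2 : (posN (fun j => nat_of_ord (I2 j)) j < size s1)%N by rewrite es sz2 posN_max.
  have := congr1 (fun t => tnth t j) eh; rewrite /= !tnth_hmap -es => /eqP.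
  by rewrite nth_uniq // => /eqP.
have eI : I1 = I2.
  by apply/ffunP => j; apply: val_inj; apply: (Npart_inj eN).
subst I2; congr Tagged; exact: val_inj.
Qed.

Lemma surj f (t : K.-tuple 'I_n.+1) : sorted ltI t -> condf t f ->
  exists2 u, Dsel f u & t = hU u.
Proof.
move=> st /forallP ct.
pose A := [pred y : 'I_n.+1 | [exists x, f x == y] || [exists j, tnth t j == y]].
pose s0 := [seq y <- enum 'I_n.+1 | A y].
have ss0 : sorted ltI s0 by apply: sorted_filter; [exact: ltI_trans | exact: sorted_enum_ordI].
have ms0 y : (y \in s0) = A y by rewrite mem_filter mem_enum andbT.
have us0 := sorted_uniqI ss0.
have tin j : tnth t j \in s0.
  by rewrite ms0 /= orbC; apply/orP; left; apply/existsP; exists j.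
have fin x : f x \in s0.
  by rewrite ms0 /=; apply/orP; left; apply/existsP; exists x.
pose Q (j : 'I_K) := index (tnth t j) s0.
have tlt (i j : 'I_K) : (i < j)%N -> (val (tnth t i) < val (tnth t j))%N.
  by move=> ij; rewrite !(tnth_nth ord0); apply: nth_ltI => //; rewrite size_tuple.
have Qlt (i j : 'I_K) : (i < j)%N -> (Q i < Q j)%N.
  by move=> ij; apply: index_ltI => //; apply: tlt.
pose Inat (j : 'I_K) : nat := (Q j - (if (j : nat) is j'.+1 then (Q (inord j')).+1 else 0))%N.
have ps m : (m < K)%N -> psum (fun l => (Inat l).+1) m.+1 = (Q (inord m)).+1.
  elim: m => [|m IH] mK.
    by rewrite psumS psum0 add0n /Inat (@inordK k 0) //= subn0.
  rewrite psumS IH ?(ltnW mK) // /Inat (@inordK k m.+1) //=.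
  have : (Q (inord m) < Q (inord m.+1))%N.
    by apply: Qlt; rewrite !inordK // ltnW.
  move=> h; by rewrite addnS subnKC.
have NQ j : Npart Inat j = (Q j).+1 by rewrite NpartE ps // inord_val.
have pQ j : posN Inat j = Q j by rewrite /posN NQ.
have yle y : y \in s0 -> (val y <= val (tnth t ord_max))%N.
  rewrite ms0 => /orP[/existsP[x /eqP <-]|/existsP[j /eqP <-]].
    by have := implyP (forallP (ct x) ord_max) (ltn_ord x).
  by apply: sorted_tnth => //; rewrite -ltnS ltn_ord.
have szpos : (0 < size s0)%N by case: (s0) (tin ord0).
have maxQ : size s0 = (Q ord_max).+1.
  have zin : nth ord0 s0 (size s0).-1 \in s0 by rewrite mem_nth // prednK.
  have := index_leI ss0 zin (tin ord_max) (yle _ zin).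
  rewrite index_uniq ?prednK // => h1.
  have h2 : (Q ord_max < size s0)%N by rewrite index_mem.
  apply/eqP; rewrite eqn_leq h2 andbT.
  by rewrite -(prednK szpos) ltnS.
have szN : size s0 = Npart Inat ord_max by rewrite NQ.
have PI : Pf Inat s0 f.
  apply/and3P; split.
  - by apply/forallP => x; exact: fin x.
  - apply/forallP => x; apply/forallP => j; apply/implyP => xj.
    rewrite pQ /Q nth_index //; exact: (implyP (forallP (ct x) j) xj).
  - apply/forallP => y; apply/implyP; rewrite ms0 => /orP[->//|/existsP[j /eqP ej]].
    by apply/orP; right; apply/existsP; exists j; rewrite pQ /Q nth_index // ej.
have bnd := Pf_bound ss0 szN PI.
pose I : {ffun 'I_K -> 'I_(btotal beta).+1} := [ffun j => inord (Inat j)].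
have IE : (fun j => nat_of_ord (I j)) = Inat.
  apply: functional_extensionality => j.
  by rewrite ffunE inordK // ltnS (leq_trans (bnd j) (bsuffix_le _ _)).
have szc : size s0 == size (compos alpha (fun j => nat_of_ord (I j))).
  by rewrite IE compos_size szN.
exists (Tagged Ufam (Tuple szc)).
- rewrite /Dsel /=; apply/and3P; split.
  + by apply/forallP => j; have := bnd j; rewrite -IE.
  + exact: ss0.
  + by rewrite IE.
- apply: eq_from_tnth => j; rewrite /hU /= tnth_hmap IE pQ nth_index //.
Qed.
End Bij.

Local Open Scope ring_scope.

Lemma per_f k (alpha beta : 'I_k.+1 -> nat) n (f : {ffun 'I_(bpart beta ord_max) -> 'I_n.+1}) :
  \sum_(t : k.+1.-tuple 'I_n.+1 | sorted (fun a b : 'I_n.+1 => (val a < val b)%N) t && condf t f)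
     mono alpha t =
  \sum_(u : U alpha beta n | Dsel f u) mono alpha (hU u).
Proof.
transitivity (\sum_(t in (@hU k alpha beta n) @: (@Dsel k alpha beta n f)) mono alpha t).
  apply: eq_bigl => t; apply/idP/imsetP.
  - by case/andP => st ct; have [u uD ->] := surj alpha st ct; exists u.
  - by case=> u uD ->; apply: image_ok.
by rewrite big_imset //; apply: inj_on.
Qed.

Unset Implicit Arguments.
Theorem proposition5p4 (k : nat) (alpha beta : 'I_k.+1 -> nat) :
  (0 < alpha ord_max)%N ->
  forall n : nat,
    Mhat n alpha beta =
    \sum_(I : {ffun 'I_k.+1 -> 'I_(btotal beta).+1} |
            [forall j : 'I_k.+1, (nat_of_ord (I j) <= bsuffix beta j)%N])
      (cbI beta (fun j => nat_of_ord (I j)))%:R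
        * Mq n (compos alpha (fun j => nat_of_ord (I j))).
Proof.
move=> _ [|n].
  rewrite /Mhat big1; last by move=> t _; case: (tnth t ord0) => m; rewrite ltn0.
  symmetry; apply: big1 => I _; rewrite /Mq big1 ?mulr0 // => s _.
  have hp : (0 < size (compos alpha (fun j => nat_of_ord (I j))))%N.
    by rewrite compos_size Npart_posN.
  by case: (tnth s (Ordinal hp)) => m; rewrite ltn0.
transitivity (\sum_(f : {ffun 'I_(bpart beta ord_max) -> 'I_n.+1})
   \sum_(u : U alpha beta n | Dsel f u) mono alpha (hU u)).
  rewrite /Mhat.
  transitivity (\sum_(t : k.+1.-tuple 'I_n.+1 | sorted (fun a b : 'I_n.+1 => (val a < val b)%N) t)
     \sum_(f : {ffun 'I_(bpart beta ord_max) -> 'I_n.+1} | condf t f) mono alpha t).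
    apply: eq_bigr => t st.
    rewrite big_split /= -natr_prod (lhs_count beta st) mulr_natl -sumr_const.
    by apply: eq_bigl => f; rewrite inE.
  rewrite (exchange_big_dep xpredT) //=.
  by apply: eq_bigr => f _; apply: per_f.
symmetry.
transitivity (\sum_(I : {ffun 'I_k.+1 -> 'I_(btotal beta).+1} |
            [forall j : 'I_k.+1, (nat_of_ord (I j) <= bsuffix beta j)%N])
   \sum_(s : @Ufam k alpha beta n I | sorted (fun a b : 'I_n.+1 => (val a < val b)%N) s)
   \sum_(f : {ffun 'I_(bpart beta ord_max) -> 'I_n.+1} | Pf (fun j => nat_of_ord (I j)) s f) mono alpha (hmap (fun j => nat_of_ord (I j)) s)).
  apply: eq_bigr => I _; rewrite Mq_expand mulr_sumr; apply: eq_bigr => s ss.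
  have sz : size s = Npart (fun j => nat_of_ord (I j)) ord_max by rewrite size_tuple compos_size.
  rewrite (cbI_count beta ss sz) mulr_natl -sumr_const.
  by apply: eq_bigl => f; rewrite inE.
rewrite (sig_big_dep (J := @Ufam k alpha beta n)).
rewrite (exchange_big_dep xpredT) //=.
apply: eq_bigr => f _; apply: eq_bigl => u.
by rewrite /Dsel andbA.
Qed.
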